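(* Let $\alpha=\exp\left(\frac{2\pi i}{5}\right)$, let $c,x\in\mathbb{C}$, let $a_1,\dots,a_p\in\mathbb{C}$ and $b_1,\dots,b_q\in\mathbb{C}\setminus\{0,-1,-2,\dots\}$, and suppose either $5p\le 5q+4$ (with $x$ arbitrary), or $p=q+1$ and $\left|\left(\frac{cx^2}{5^{1+q-p}}\right)^5\right|<1$. Then $$\sum_{k=0}^{4}{}_pF_q\left[\begin{array}{c}a_1,\dots,a_p;\\ b_1,\dots,b_q;\end{array}c(x\alpha^k)^2\right] =5\,{}_{5p}F_{5q+4}\left[\begin{array}{c}\Big\{\tfrac{a_j}{5},\tfrac{a_j+1}{5},\tfrac{a_j+2}{5},\tfrac{a_j+3}{5},\tfrac{a_j+4}{5}\Big\}_{j=1}^{p};\\ \tfrac15,\tfrac25,\tfrac35,\tfrac45,\Big\{\tfrac{b_j}{5},\tfrac{b_j+1}{5},\tfrac{b_j+2}{5},\tfrac{b_j+3}{5},\tfrac{b_j+4}{5}\Big\}_{j=1}^{q};\end{array}\left(\frac{cx^2}{5^{1+q-p}}\right)^5\right],$$ where the braces denote the lists of parameters obtained for $j=1,\dots,p$ (resp. $j=1,\dots,q$).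
   Context: The generalized hypergeometric function is ${}_pF_q\left[\begin{array}{c}\alpha_1,\dots,\alpha_p;\\\beta_1,\dots,\beta_q;\end{array}z\right]=\sum_{n=0}^{\infty}\frac{(\alpha_1)_n\cdots(\alpha_p)_n}{(\beta_1)_n\cdots(\beta_q)_n}\frac{z^n}{n!}$, with $(\lambda)_n=\lambda(\lambda+1)\cdots(\lambda+n-1)$, $(\lambda)_0=1$. Values of parameters and variables for which the expressions do not make sense are excluded. *)

(* Defs.v *)
From Stdlib Require Import Reals List Arith Factorial.
From Coquelicot Require Import Coquelicot.
Import ListNotations.
Open Scope R_scope.

Fixpoint poch (l : C) (n : nat) : C :=
  match n with O => RtoC 1 | S m => Cmult (poch l m) (Cplus l (RtoC (INR m))) end.

Definition Cprod (s : list C) : C := fold_right Cmult (RtoC 1) s.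

(* n-th term of pFq[A; B; z], with p = length A, q = length B *)
Definition hyp_term (A B : list C) (z : C) (n : nat) : C :=
  Cmult (Cdiv (Cprod (map (fun a => poch a n) A)) (Cprod (map (fun b => poch b n) B)))
        (Cdiv (Cpow z n) (RtoC (INR (fact n)))).

Definition hypF_sum (A B : list C) (z : C) (v : C) : Prop :=
  is_series (hyp_term A B z) v.

Definition alpha5 : C := (cos (2 * PI / 5), sin (2 * PI / 5)).

Definition split5 (a : C) : list C :=
  map (fun i : nat => Cdiv (Cplus a (RtoC (INR i))) (RtoC 5)) [0; 1; 2; 3; 4]%nat.

Definition upper5 (A : list C) : list C := flat_map split5 A.
Definition lower5 (B : list C) : list C :=
  [Cdiv (RtoC 1) (RtoC 5); Cdiv (RtoC 2) (RtoC 5); Cdiv (RtoC 3) (RtoC 5);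
   Cdiv (RtoC 4) (RtoC 5)] ++ flat_map split5 B.

(* Main.v *)
Require Import Defs.
From Stdlib Require Import Reals List.
From Stdlib Require Import Lia Lra Arith Factorial ZArith.
From Coquelicot Require Import Coquelicot.
Open Scope R_scope.

Lemma RtoC_INR_S n : RtoC (INR (S n)) = (RtoC (INR n) + 1)%C.
Proof. rewrite S_INR, RtoC_plus. reflexivity. Qed.

Lemma RtoC_neq (x y : R) : x <> y -> RtoC x <> RtoC y.
Proof. intros H E. apply H. now injection E. Qed.

Lemma poch_nz b : (forall n, b <> RtoC (- INR n)) -> forall n, poch b n <> 0%C.
Proof.
  intros hb n; induction n; simpl.
  - apply RtoC_neq; lra.
  - apply Cmult_neq_0; auto. intro E. apply (hb n).
    replace b with ((b + RtoC (INR n)) - RtoC (INR n))%C by ring.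
    rewrite E, RtoC_opp. ring.
Qed.

Lemma poch_add l m k : poch l (m + k) = (poch l m * poch (l + RtoC (INR m)) k)%C.
Proof.
  induction k.
  - rewrite Nat.add_0_r; simpl; ring.
  - rewrite Nat.add_succ_r; simpl. rewrite IHk, plus_INR, RtoC_plus. ring.
Qed.

Lemma poch_5 l : poch l 5 = (l * (l+1) * (l+2) * (l+3) * (l+4))%C.
Proof. simpl. rewrite !RtoC_plus. ring. Qed.

Lemma RtoC_INR_5m m : RtoC (INR (5*m)) = (5 * RtoC (INR m))%C.
Proof. rewrite mult_INR, RtoC_mult. f_equal. f_equal. simpl. ring. Qed.

Lemma five_nz : RtoC 5 <> 0%C.
Proof. apply RtoC_neq; lra. Qed.

Lemma poch5 a m : poch a (5*m) =
  (Cpow (RtoC 5) (5*m) * (poch (a/5) m * poch ((a+1)/5) m * poch ((a+2)/5) m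
    * poch ((a+3)/5) m * poch ((a+4)/5) m))%C.
Proof.
  induction m.
  - simpl. ring.
  - replace (5 * S m)%nat with (5*m + 5)%nat by lia.
    rewrite poch_add, IHm, Cpow_add_r, poch_5, RtoC_INR_5m. simpl poch.
    field.
Qed.

Lemma poch_1 n : poch (RtoC 1) n = RtoC (INR (fact n)).
Proof.
  induction n; simpl poch. reflexivity.
  rewrite IHn. change (fact (S n)) with (S n * fact n)%nat.
  rewrite mult_INR, S_INR, !RtoC_mult, RtoC_plus. ring.
Qed.

Lemma Cprod_app l1 l2 : Cprod (l1 ++ l2) = (Cprod l1 * Cprod l2)%C.
Proof. induction l1; simpl. ring. rewrite IHl1. ring. Qed.

Lemma Cprod_flat_map {T} (f : C -> C) (g : T -> list C) (A : list T) :
  Cprod (map f (flat_map g A)) = Cprod (map (fun a => Cprod (map f (g a))) A).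
Proof. induction A; simpl. reflexivity. rewrite map_app, Cprod_app, IHA. reflexivity. Qed.

Lemma Cprod_map_scal (f : C -> C) (X : C) A :
  Cprod (map (fun a => X * f a) A)%C = (Cpow X (length A) * Cprod (map f A))%C.
Proof. induction A; simpl. ring. rewrite IHA. ring. Qed.

Lemma Cprod_map_mult (f g : C -> C) A :
  Cprod (map (fun a => f a * g a) A)%C = (Cprod (map f A) * Cprod (map g A))%C.
Proof. induction A; simpl. ring. rewrite IHA. ring. Qed.

Lemma Cprod_nz (L : list C) : (forall x, In x L -> x <> 0%C) -> Cprod L <> 0%C.
Proof.
  induction L; simpl; intros H. apply RtoC_neq; lra.
  apply Cmult_neq_0; auto.
Qed.

Lemma split5_prod a m : Cprod (map (fun l => poch l m) (split5 a)) =
  (poch a (5*m) / Cpow (RtoC 5) (5*m))%C.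
Proof.
  rewrite poch5. unfold split5. simpl map. unfold Cprod; simpl fold_right.
  replace (1+1+1+1)%R with 4%R by ring.
  replace (1+1+1)%R with 3%R by ring.
  replace (1+1)%R with 2%R by ring.
  replace (a + RtoC 0)%C with a by ring.
  field. apply Cpow_nz, five_nz.
Qed.

Lemma fact5 m : RtoC (INR (fact (5*m))) =
  (Cpow (RtoC 5) (5*m) * (poch (RtoC 1/RtoC 5) m * poch (RtoC 2/RtoC 5) m
     * poch (RtoC 3/RtoC 5) m * poch (RtoC 4/RtoC 5) m) * RtoC (INR (fact m)))%C.
Proof.
  rewrite <- !poch_1, poch5.
  replace (RtoC 1 + RtoC 1)%C with (RtoC 2) by (rewrite <- RtoC_plus; f_equal; ring).
  replace (RtoC 1 + RtoC 2)%C with (RtoC 3) by (rewrite <- RtoC_plus; f_equal; ring).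
  replace (RtoC 1 + RtoC 3)%C with (RtoC 4) by (rewrite <- RtoC_plus; f_equal; ring).
  replace (RtoC 1 + RtoC 4)%C with (RtoC 5) by (rewrite <- RtoC_plus; f_equal; ring).
  replace (RtoC 5 / RtoC 5)%C with (RtoC 1) by (field; apply five_nz).
  ring.
Qed.

Lemma Cprod_cons x l : Cprod (x :: l) = (x * Cprod l)%C.
Proof. reflexivity. Qed.

Lemma upper_prod A m : Cprod (map (fun l => poch l m) (upper5 A)) =
  (Cpow (/ Cpow (RtoC 5) (5*m)) (length A) * Cprod (map (fun a => poch a (5*m)) A))%C.
Proof.
  induction A as [|a A IH]. simpl; ring.
  unfold upper5 in *. cbn [flat_map]. rewrite map_app, Cprod_app, IH, split5_prod.
  cbn [length Cpow]. unfold Cdiv. cbn [map]. rewrite Cprod_cons. ring.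
Qed.

Lemma lower_prod B m : Cprod (map (fun l => poch l m) (lower5 B)) =
  ((poch (RtoC 1/RtoC 5) m * poch (RtoC 2/RtoC 5) m
     * poch (RtoC 3/RtoC 5) m * poch (RtoC 4/RtoC 5) m) *
   (Cpow (/ Cpow (RtoC 5) (5*m)) (length B) * Cprod (map (fun a => poch a (5*m)) B)))%C.
Proof.
  unfold lower5. rewrite map_app, Cprod_app. fold (upper5 B). rewrite upper_prod.
  simpl. ring.
Qed.

Lemma fact_nz n : RtoC (INR (fact n)) <> 0%C.
Proof. apply RtoC_neq. pose proof (lt_0_INR _ (lt_O_fact n)). lra. Qed.

Lemma term5 (A B : list C) z m K :
  (length A + K = S (length B))%nat ->
  (forall b, In b B -> forall n, b <> RtoC (- INR n)) ->
  hyp_term (upper5 A) (lower5 B) (Cpow (z / Cpow (RtoC 5) K) 5) m = hyp_term A B z (5*m).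
Proof.
  intros HK hB. unfold hyp_term.
  rewrite upper_prod, lower_prod, fact5.
  set (X := Cpow (RtoC 5) (5*m)).
  set (Q := (poch (RtoC 1/RtoC 5) m * poch (RtoC 2/RtoC 5) m
     * poch (RtoC 3/RtoC 5) m * poch (RtoC 4/RtoC 5) m)%C).
  set (PA := Cprod (map (fun a => poch a (5*m)) A)).
  set (PB := Cprod (map (fun a => poch a (5*m)) B)).
  set (F := RtoC (INR (fact m))).
  assert (HX : X <> 0%C) by (apply Cpow_nz, five_nz).
  assert (HF : F <> 0%C) by apply fact_nz.
  assert (HQ : Q <> 0%C).
  { intro E. apply (fact_nz (5*m)). rewrite fact5. fold X Q F. rewrite E. ring. }
  assert (HPB : PB <> 0%C).
  { apply Cprod_nz. intros x Hx. apply in_map_iff in Hx. destruct Hx as [b [<- Hb]].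
    apply poch_nz, hB, Hb. }
  assert (Hw : Cpow (Cpow (z / Cpow (RtoC 5) K) 5) m = (Cpow z (5*m) / Cpow X K)%C).
  { rewrite <- Cpow_mult_r. unfold Cdiv. rewrite Cpow_mult_l, Cpow_inv by (apply Cpow_nz, five_nz).
    rewrite <- Cpow_mult_r. unfold X. rewrite <- Cpow_mult_r. f_equal. f_equal. f_equal. lia. }
  rewrite Hw. rewrite !Cpow_inv by exact HX.
  assert (E : (Cpow X (length A) * Cpow X K = Cpow X (length B) * X)%C).
  { rewrite <- Cpow_add_r, HK. simpl. ring. }
  assert (HXA : Cpow X (length A) <> 0%C) by (apply Cpow_nz; exact HX).
  assert (HXK : Cpow X K <> 0%C) by (apply Cpow_nz; exact HX).
  assert (HXB : Cpow X (length B) <> 0%C) by (apply Cpow_nz; exact HX).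
  transitivity (PA * Cpow X (length B) / (Cpow X (length A) * Cpow X K * Q * PB * F) * Cpow z (5*m))%C.
  { field. repeat split; assumption. }
  rewrite E. field. repeat split; assumption.
Qed.


Lemma alpha_pow j : Cpow alpha5 j = (cos (INR j * (2*PI/5)), sin (INR j * (2*PI/5))).
Proof.
  induction j.
  - simpl. rewrite Rmult_0_l, cos_0, sin_0. reflexivity.
  - rewrite Cpow_S, IHj. unfold alpha5, Cmult. simpl fst; simpl snd.
    rewrite S_INR. replace ((INR j + 1) * (2 * PI / 5)) with (INR j * (2*PI/5) + 2*PI/5) by ring.
    rewrite cos_plus, sin_plus. f_equal; ring.
Qed.

Lemma alpha5_5 : Cpow alpha5 5 = RtoC 1.
Proof.
  rewrite alpha_pow. replace (INR 5 * (2*PI/5)) with (2*PI) by (simpl; field).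
  rewrite cos_2PI, sin_2PI. reflexivity.
Qed.

Lemma alpha_pow_mod j : Cpow alpha5 j = Cpow alpha5 (j mod 5).
Proof.
  rewrite (Nat.div_mod_eq j 5) at 1. rewrite Cpow_add_r, Cpow_mult_r, alpha5_5, Cpow_1_l.
  ring.
Qed.

Lemma alpha_pow_ne1 j : (j mod 5 <> 0)%nat -> Cpow alpha5 j <> RtoC 1.
Proof.
  intros H. rewrite alpha_pow_mod.
  assert (Hr : (j mod 5 < 5)%nat) by (apply Nat.mod_upper_bound; lia).
  revert H Hr. generalize (j mod 5). intros r H Hr.
  rewrite alpha_pow. intro E. injection E as E1 E2.
  pose proof PI_RGT_0.
  destruct r as [|[|[|[|[|r]]]]]; try lia.
  - assert (0 < sin (INR 1 * (2 * PI / 5))) by (apply sin_gt_0; simpl; lra). lra.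
  - assert (0 < sin (INR 2 * (2 * PI / 5))) by (apply sin_gt_0; simpl; lra). lra.
  - assert (sin (INR 3 * (2 * PI / 5)) < 0) by (apply sin_lt_0; simpl; lra). lra.
  - assert (sin (INR 4 * (2 * PI / 5)) < 0) by (apply sin_lt_0; simpl; lra). lra.
Qed.

Lemma geo5 g : Cpow g 5 = RtoC 1 -> g <> RtoC 1 ->
  (RtoC 1 + g + Cpow g 2 + Cpow g 3 + Cpow g 4 = 0)%C.
Proof.
  intros H5 H1.
  assert (Hd : (RtoC 1 - g)%C <> 0%C).
  { intro E. apply H1. replace g with (RtoC 1 - (RtoC 1 - g))%C by ring. rewrite E. ring. }
  transitivity ((RtoC 1 - Cpow g 5) / (RtoC 1 - g))%C.
  { field. exact Hd. }
  rewrite H5. field. exact Hd.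
Qed.

Definition s5 (n : nat) : C := if Nat.eqb (n mod 5) 0 then RtoC 5 else RtoC 0.

Lemma root_sum n :
  (RtoC 1 + Cpow alpha5 (2*n) + Cpow (Cpow alpha5 (2*n)) 2 + Cpow (Cpow alpha5 (2*n)) 3
    + Cpow (Cpow alpha5 (2*n)) 4)%C = s5 n.
Proof.
  unfold s5. destruct (Nat.eqb_spec (n mod 5) 0) as [H|H].
  - rewrite alpha_pow_mod.
    replace ((2*n) mod 5)%nat with 0%nat.
    + replace (RtoC 5) with (RtoC 1 + RtoC 1 + RtoC 1 + RtoC 1 + RtoC 1)%C by (rewrite <- !RtoC_plus; f_equal; ring). simpl. ring.
    + rewrite Nat.Div0.mul_mod, H. reflexivity.
  - apply geo5.
    + rewrite <- Cpow_mult_r, Nat.mul_comm, Cpow_mult_r, alpha5_5, Cpow_1_l. reflexivity.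
    + apply alpha_pow_ne1. rewrite Nat.Div0.mul_mod.
      assert (Hr : (n mod 5 < 5)%nat) by (apply Nat.mod_upper_bound; lia).
      destruct (n mod 5) as [|[|[|[|[|r]]]]]; simpl; lia.
Qed.

Lemma hyp_term_scale A B z w n : hyp_term A B (z * w)%C n = (hyp_term A B z n * Cpow w n)%C.
Proof. unfold hyp_term. rewrite Cpow_mult_l. unfold Cdiv. ring. Qed.

Lemma nz_mod m k : (1 <= k <= 4)%nat -> ((5*m + k) mod 5 <> 0)%nat.
Proof. intros H. rewrite Nat.add_comm, Nat.mul_comm, Nat.Div0.mod_add, Nat.mod_small by lia. lia. Qed.

Lemma series_sub5 (v : nat -> C) L : is_series v L ->
  (forall n, (n mod 5 <> 0)%nat -> v n = RtoC 0) -> is_series (fun m => v (5*m)%nat) L.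
Proof.
  intros Hv Hz.
  assert (Hz' : forall n, (n mod 5 <> 0)%nat -> v n = zero) by (intros; rewrite Hz; auto).
  assert (Hs : forall m, sum_n (fun m => v (5*m)%nat) m = sum_n v (5*m+4)).
  { induction m.
    - change (5*0+4)%nat with 4%nat. rewrite !sum_Sn, !sum_O. simpl.
      rewrite (Hz' 1%nat), (Hz' 2%nat), (Hz' 3%nat), (Hz' 4%nat) by (simpl; lia).
      rewrite !plus_zero_r. reflexivity.
    - replace (5 * S m + 4)%nat with (S (S (S (S (S (5*m+4))))))%nat by lia.
      rewrite !sum_Sn, IHm.
      rewrite (Hz' (S (S (5*m+4)))) by (replace (S (S (5*m+4))) with (5*(m+1)+1)%nat by lia; apply nz_mod; lia).
      rewrite (Hz' (S (S (S (5*m+4))))) by (replace (S (S (S (5*m+4)))) with (5*(m+1)+2)%nat by lia; apply nz_mod; lia).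
      rewrite (Hz' (S (S (S (S (5*m+4)))))) by (replace (S (S (S (S (5*m+4))))) with (5*(m+1)+3)%nat by lia; apply nz_mod; lia).
      rewrite (Hz' (S (S (S (S (S (5*m+4))))))) by (replace (S (S (S (S (S (5*m+4)))))) with (5*(m+1)+4)%nat by lia; apply nz_mod; lia).
      rewrite !plus_zero_r. f_equal. f_equal. lia. }
  unfold is_series.
  apply filterlim_ext with (fun m => sum_n v (5*m+4)).
  { intros; rewrite Hs; reflexivity. }
  apply (filterlim_comp _ _ _ (fun m => 5*m+4)%nat (sum_n v) _ eventually).
  - apply eventually_subseq. intros; lia.
  - exact Hv.
Qed.



Lemma ratio_series (t : nat -> C) th N : 0 <= th < 1 ->
  (forall n, (N <= n)%nat -> Cmod (t (S n)) <= th * Cmod (t n)) -> ex_series t.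
Proof.
  intros Hth H.
  assert (Hb : forall m, Cmod (t (N+m)%nat) <= th ^ m * Cmod (t N)).
  { induction m.
    - rewrite Nat.add_0_r. simpl. lra.
    - rewrite Nat.add_succ_r. eapply Rle_trans. apply H. lia.
      simpl. rewrite Rmult_assoc. apply Rmult_le_compat_l; lra. }
  apply (proj2 (ex_series_incr_n t N)).
  apply (@ex_series_le C_AbsRing C_CompleteNormedModule _ (fun m => th ^ m * Cmod (t N))).
  - intros m. exact (Hb m).
  - exists (/ (1 - th) * Cmod (t N)). apply is_series_scal_r, is_series_geom.
    rewrite Rabs_pos_eq; lra.
Qed.

Lemma nat_large (K : R) : exists N, forall n, (N <= n)%nat -> K <= INR n.
Proof.
  destruct (archimed K) as [H1 H2].
  exists (Z.to_nat (up K)). intros n Hn.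
  apply le_INR in Hn. eapply Rle_trans; [|exact Hn].
  destruct (Z_le_gt_dec (up K) 0) as [Hz|Hz].
  - apply IZR_le in Hz. pose proof (pos_INR (Z.to_nat (up K))). lra.
  - rewrite INR_IZR_INZ, Z2Nat.id by lia. lra.
Qed.

Lemma div_le (X Y th : R) : 0 < Y -> X <= th * Y -> X / Y <= th.
Proof.
  intros HY H. unfold Rdiv.
  replace th with (th * Y * / Y) by (field; lra).
  apply Rmult_le_compat_r. left; apply Rinv_0_lt_compat; lra. exact H.
Qed.

Lemma bern (e : R) k : 0 <= e <= 1 -> (1 + e) ^ k <= 1 + 3 ^ k * e.
Proof.
  intros He. induction k.
  - simpl. lra.
  - simpl. assert (1 <= 3 ^ k) by (apply pow_R1_Rle; lra).
    assert (0 <= (1+e)^k) by (apply pow_le; lra).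
    assert ((1+e)*(1+e)^k <= (1+e)*(1 + 3^k*e)) by (apply Rmult_le_compat_l; lra).
    assert (e*e <= e) by nra.
    assert (3^k * (e*e) <= 3^k * e) by (apply Rmult_le_compat_l; lra).
    nra.
Qed.



Lemma Cprod_poch_S L n : Cprod (map (fun a => poch a (S n)) L) =
  (Cprod (map (fun a => poch a n) L) * Cprod (map (fun a => a + RtoC (INR n)) L))%C.
Proof.
  induction L as [|a L IH]. simpl; ring.
  cbn [map]. rewrite !Cprod_cons, IH. cbn [poch]. ring.
Qed.





Lemma shift_nz b n : (forall n, b <> RtoC (- INR n)) -> (b + RtoC (INR n))%C <> 0%C.
Proof.
  intros hb E. apply (hb n).
  replace b with ((b + RtoC (INR n)) - RtoC (INR n))%C by ring.
  rewrite E, RtoC_opp. ring.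
Qed.



Lemma hyp_ratio A B z n : (forall b, In b B -> forall n : nat, b <> RtoC (- INR n)) ->
  hyp_term A B z (S n) = (hyp_term A B z n *
    (Cprod (map (fun a => a + RtoC (INR n)) A) / Cprod (map (fun a => a + RtoC (INR n)) B)
     * (z / RtoC (INR (S n)))))%C.
Proof.
  intros hB. unfold hyp_term. rewrite !Cprod_poch_S.
  assert (H1 : Cprod (map (fun a => poch a n) B) <> 0%C).
  { apply Cprod_nz. intros x Hx. apply in_map_iff in Hx. destruct Hx as [b [<- Hb]].
    apply poch_nz, hB, Hb. }
  assert (H2 : Cprod (map (fun a => a + RtoC (INR n))%C B) <> 0%C).
  { apply Cprod_nz. intros x Hx. apply in_map_iff in Hx. destruct Hx as [b [<- Hb]].
    apply shift_nz, hB, Hb. }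
  assert (H3 : RtoC (INR (S n)) <> 0%C).
  { apply RtoC_neq. pose proof (lt_0_INR (S n) (Nat.lt_0_succ n)). lra. }
  pose proof (fact_nz n) as H4.
  change (fact (S n)) with (S n * fact n)%nat. rewrite mult_INR, RtoC_mult.
  rewrite Cpow_S. field. repeat split; assumption.
Qed.

Lemma Cprod_up L n M : (forall a, In a L -> Cmod a <= M) ->
  Cmod (Cprod (map (fun a => a + RtoC (INR n))%C L)) <= (M + INR n) ^ length L.
Proof.
  induction L as [|a L IH]; intros H; simpl.
  - rewrite Cmod_1. lra.
  - rewrite Cmod_mult. apply Rmult_le_compat.
    + apply Cmod_ge_0.
    + apply Cmod_ge_0.
    + eapply Rle_trans. apply Cmod_triangle. rewrite Cmod_R, Rabs_pos_eq by apply pos_INR.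
      pose proof (H a (or_introl eq_refl)). lra.
    + apply IH. intros; apply H; right; auto.
Qed.

Lemma Cprod_low L n M : (forall a, In a L -> Cmod a <= M) -> M <= INR n ->
  (INR n - M) ^ length L <= Cmod (Cprod (map (fun a => a + RtoC (INR n))%C L)).
Proof.
  induction L as [|a L IH]; intros H HM; simpl.
  - rewrite Cmod_1. lra.
  - rewrite Cmod_mult. apply Rmult_le_compat.
    + lra.
    + apply pow_le. lra.
    + pose proof (Cmod_triangle (a + RtoC (INR n)) (- a)).
      replace (a + RtoC (INR n) + - a)%C with (RtoC (INR n)) in H0 by ring.
      rewrite Cmod_R, Rabs_pos_eq, Cmod_opp in H0 by apply pos_INR.
      pose proof (H a (or_introl eq_refl)). lra.
    + apply IH; auto. intros; apply H; right; auto.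
Qed.

Lemma list_bound (L : list C) : exists M, 1 <= M /\ forall a, In a L -> Cmod a <= M.
Proof.
  induction L as [|a L [M [HM H]]].
  - exists 1. split. lra. intros a []. 
  - exists (Rmax M (Cmod a)). split. eapply Rle_trans; [exact HM| apply Rmax_l].
    intros b [<-|Hb]. apply Rmax_r. eapply Rle_trans; [apply H, Hb| apply Rmax_l].
Qed.

Lemma ratio_bound A B z M n :
  (forall a, In a A -> Cmod a <= M) -> (forall a, In a B -> Cmod a <= M) ->
  (forall b, In b B -> forall n : nat, b <> RtoC (- INR n)) ->
  1 <= M -> 2 * M <= INR n ->
  Cmod (hyp_term A B z (S n)) <=
  (Cmod z * (M + INR n) ^ length A / ((INR n - M) ^ length B * (INR n + 1)))
    * Cmod (hyp_term A B z n).
Proof.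
  intros HA HB hB HM Hn.
  rewrite hyp_ratio by exact hB. rewrite Cmod_mult, (Rmult_comm _ (Cmod (hyp_term A B z n))).
  apply Rmult_le_compat_l. apply Cmod_ge_0.
  assert (H2 : Cprod (map (fun a => a + RtoC (INR n))%C B) <> 0%C).
  { apply Cprod_nz. intros x Hx. apply in_map_iff in Hx. destruct Hx as [b [<- Hb]].
    apply shift_nz, hB, Hb. }
  assert (H3 : RtoC (INR (S n)) <> 0%C).
  { apply RtoC_neq. pose proof (lt_0_INR (S n) (Nat.lt_0_succ n)). lra. }
  rewrite Cmod_mult, !Cmod_div by assumption.
  rewrite Cmod_R, Rabs_pos_eq by apply pos_INR. rewrite S_INR.
  set (NA := Cmod (Cprod (map (fun a => a + RtoC (INR n))%C A))).
  set (NB := Cmod (Cprod (map (fun a => a + RtoC (INR n))%C B))).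
  assert (HU : NA <= (M + INR n) ^ length A) by (apply Cprod_up; auto).
  assert (HD : (INR n - M) ^ length B <= NB) by (apply Cprod_low; auto; lra).
  assert (HD0 : 0 < (INR n - M) ^ length B) by (apply pow_lt; lra).
  assert (HNA : 0 <= NA) by apply Cmod_ge_0.
  assert (Hn1 : 0 < INR n + 1) by (pose proof (pos_INR n); lra).
  assert (Hz : 0 <= Cmod z) by apply Cmod_ge_0.
  apply Rle_trans with ((M + INR n) ^ length A / (INR n - M) ^ length B * (Cmod z / (INR n + 1))).
  - apply Rmult_le_compat_r.
    + unfold Rdiv. apply Rmult_le_pos; [lra| left; apply Rinv_0_lt_compat; lra].
    + unfold Rdiv. apply Rmult_le_compat; auto.
      * left; apply Rinv_0_lt_compat; lra.
      * apply Rinv_le_contravar; lra.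
  - right. field. lra.
Qed.

Lemma hyp_conv A B z : (forall b, In b B -> forall n : nat, b <> RtoC (- INR n)) ->
  ((length A <= length B)%nat \/ (length A = S (length B) /\ Cmod z < 1)) ->
  ex_series (hyp_term A B z).
Proof.
  intros hB Hc.
  destruct (list_bound (A ++ B)) as [M [HM HMb]].
  assert (HA : forall a, In a A -> Cmod a <= M) by (intros; apply HMb, in_or_app; auto).
  assert (HB : forall a, In a B -> Cmod a <= M) by (intros; apply HMb, in_or_app; auto).
  assert (Hz : 0 <= Cmod z) by apply Cmod_ge_0.
  set (p := length A) in *. set (q := length B) in *.
  destruct Hc as [Hpq | [Hpq Hz1]].
  - destruct (nat_large (Rmax (2*M) (2 * Cmod z * 3 ^ p))) as [N HN].
    apply (ratio_series _ (1/2) N). lra.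
    intros n Hn. specialize (HN n Hn).
    pose proof (Rmax_l (2*M) (2 * Cmod z * 3 ^ p)).
    pose proof (Rmax_r (2*M) (2 * Cmod z * 3 ^ p)).
    eapply Rle_trans. apply ratio_bound; auto; lra.
    apply Rmult_le_compat_r. apply Cmod_ge_0.
    apply div_le. apply Rmult_lt_0_compat. apply pow_lt; lra. lra.
    change (length A) with p; change (length B) with q.
    set (d := INR n - M).
    assert (Hd : 1 <= d) by (unfold d; lra).
    assert (HU : (M + INR n) ^ p <= 3 ^ p * d ^ q).
    { apply Rle_trans with ((3 * d) ^ p).
      - apply pow_incr. unfold d; lra.
      - rewrite Rpow_mult_distr. apply Rmult_le_compat_l. apply pow_le; lra.
        apply Rle_pow; auto. }
    assert (H3 : 0 <= 3 ^ p) by (apply pow_le; lra).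
    assert (Hdq : 0 <= d ^ q) by (apply pow_le; lra).
    assert (Cmod z * (M + INR n) ^ p <= Cmod z * (3 ^ p * d ^ q)) by (apply Rmult_le_compat_l; auto).
    assert (Y0 : 2 * Cmod z * 3^p <= INR n) by lra.
    assert (Y : (2 * Cmod z * 3^p) * d^q <= INR n * d^q) by (apply Rmult_le_compat_r; auto).
    lra.
  - set (th := (1 + Cmod z) / 2).
    destruct (nat_large (M + Rmax (2*M) (4 * M * 3 ^ p / (1 - Cmod z)))) as [N HN].
    apply (ratio_series _ th N). unfold th; lra.
    intros n Hn. specialize (HN n Hn).
    pose proof (Rmax_l (2*M) (4 * M * 3 ^ p / (1 - Cmod z))).
    pose proof (Rmax_r (2*M) (4 * M * 3 ^ p / (1 - Cmod z))).
    eapply Rle_trans. apply ratio_bound; auto; lra.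
    apply Rmult_le_compat_r. apply Cmod_ge_0.
    apply div_le. apply Rmult_lt_0_compat. apply pow_lt; lra. pose proof (pos_INR n); lra.
    change (length A) with p; change (length B) with q.
    set (d := INR n - M).
    assert (Hd : 2 * M <= d) by (unfold d; lra).
    assert (Hd4 : 4 * M * 3 ^ p / (1 - Cmod z) <= d) by (unfold d; lra).
    set (e := 2 * M / d).
    assert (He : 0 <= e <= 1).
    { unfold e. split. apply Rmult_le_pos. lra. left; apply Rinv_0_lt_compat; lra.
      apply div_le; lra. }
    assert (HMn : M + INR n = d * (1 + e)) by (unfold e, d; field; lra).
    assert (H3 : 0 <= 3 ^ p) by (apply pow_le; lra).
    assert (He2 : 3 ^ p * e <= (1 - Cmod z) / 2).
    { unfold e. 
      assert (4 * M * 3 ^ p <= d * (1 - Cmod z)).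
      { apply Rmult_le_compat_r with (r := 1 - Cmod z) in Hd4; [|lra].
        unfold Rdiv in Hd4. rewrite Rmult_assoc, Rinv_l, Rmult_1_r in Hd4 by lra. lra. }
      replace (3 ^ p * (2 * M / d)) with ((4 * M * 3 ^ p) / d / 2) by (field; lra).
      unfold Rdiv. apply Rmult_le_compat_r. lra.
      apply div_le; lra. }
    rewrite HMn, Rpow_mult_distr.
    assert (Hb : (1 + e) ^ p <= 1 + 3 ^ p * e) by (apply bern; auto).
    assert (Hdp : d ^ p = d ^ q * d) by (rewrite Hpq; simpl; ring).
    rewrite Hdp.
    assert (Hdq : 0 <= d ^ q) by (apply pow_le; lra).
    assert (Hd1 : d <= INR n + 1) by (unfold d; lra).
    assert (H1e : 0 <= (1 + e) ^ p) by (apply pow_le; lra).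
    assert (X1 : d ^ q * d * (1 + e) ^ p <= d ^ q * (INR n + 1) * (1 + 3 ^ p * e)).
    { apply Rmult_le_compat; auto. apply Rmult_le_pos; lra.
      apply Rmult_le_compat_l; auto. }
    assert (X2 : Cmod z * (d ^ q * d * (1 + e) ^ p) <= Cmod z * (d ^ q * (INR n + 1) * (1 + 3 ^ p * e)))
      by (apply Rmult_le_compat_l; auto).
    assert (X3 : Cmod z * (1 + 3 ^ p * e) <= th) by (unfold th; nra).
    assert (X4 : 0 <= d ^ q * (INR n + 1)) by (apply Rmult_le_pos; lra).
    nra.
Qed.

Lemma Cmod_alpha_pow j : Cmod (Cpow alpha5 j) = 1.
Proof.
  rewrite Cmod_pow. replace (Cmod alpha5) with 1. apply pow1.
  unfold Cmod, alpha5. simpl fst; simpl snd.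
  rewrite <- sqrt_1. f_equal. rewrite <- (sin2_cos2 (2*PI/5)). unfold Rsqr. ring.
Qed.

Lemma zk_eq c x k : Cmult c (Cpow (Cmult x (Cpow alpha5 k)) 2) =
  (Cmult c (Cpow x 2) * Cpow alpha5 (2*k))%C.
Proof.
  rewrite Cpow_mult_l, <- Cpow_mult_r, Nat.mul_comm. ring.
Qed.

Theorem theorem7 (c x : C) (A B : list C)
  (hB : forall b, In b B -> forall n : nat, b <> RtoC (- INR n))
  (hconv : (5 * length A <= 5 * length B + 4)%nat \/
           (length A = S (length B) /\
            Cmod (Cpow (Cdiv (Cmult c (Cpow x 2))
                             (Cpow (RtoC 5) (1 + length B - length A))) 5) < 1)) :
  exists S : nat -> C, exists T : C,
    (forall k : nat, (k <= 4)%nat ->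
       hypF_sum A B (Cmult c (Cpow (Cmult x (Cpow alpha5 k)) 2)) (S k)) /\
    hypF_sum (upper5 A) (lower5 B)
      (Cpow (Cdiv (Cmult c (Cpow x 2)) (Cpow (RtoC 5) (1 + length B - length A))) 5) T /\
    Cplus (Cplus (Cplus (Cplus (S 0%nat) (S 1%nat)) (S 2%nat)) (S 3%nat)) (S 4%nat)
      = Cmult (RtoC 5) T.
Proof.
  set (z := Cmult c (Cpow x 2)) in *.
  assert (HK : (length A + (1 + length B - length A) = Datatypes.S (length B))%nat).
  { destruct hconv as [H|[H _]]; lia. }
  assert (Hc : forall k, (length A <= length B)%nat \/
            (length A = Datatypes.S (length B) /\
             Cmod (Cmult c (Cpow (Cmult x (Cpow alpha5 k)) 2)) < 1)).
  { intros k. destruct hconv as [H|[H H']]. left; lia. right. split. exact H.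
    rewrite zk_eq. fold z. rewrite Cmod_mult, Cmod_alpha_pow, Rmult_1_r.
    rewrite H in H'. replace (1 + length B - Datatypes.S (length B))%nat with 0%nat in H' by lia.
    rewrite Cmod_pow in H'. simpl Cpow in H'.
    replace (z / RtoC 1)%C with z in H' by (field; apply RtoC_neq; lra).
    destruct (Rlt_or_le (Cmod z) 1) as [Hl|Hl]; auto.
    pose proof (pow_R1_Rle (Cmod z) 5 Hl). lra. }
  destruct (hyp_conv A B _ hB (Hc 0%nat)) as [l0 H0].
  destruct (hyp_conv A B _ hB (Hc 1%nat)) as [l1 H1].
  destruct (hyp_conv A B _ hB (Hc 2%nat)) as [l2 H2].
  destruct (hyp_conv A B _ hB (Hc 3%nat)) as [l3 H3].
  destruct (hyp_conv A B _ hB (Hc 4%nat)) as [l4 H4].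
  set (Sig := (l0 + l1 + l2 + l3 + l4)%C).
  exists (fun k => match k with 0 => l0 | 1 => l1 | 2 => l2 | 3 => l3 | _ => l4 end)%nat.
  exists (/ RtoC 5 * Sig)%C.
  split; [|split].
  - intros k Hk. destruct k as [|[|[|[|[|k]]]]]; auto. lia.
  - set (t := hyp_term A B z).
    assert (Hsum : is_series (fun n => t n * s5 n)%C Sig).
    { pose proof (is_series_plus _ _ _ _ (is_series_plus _ _ _ _
        (is_series_plus _ _ _ _ (is_series_plus _ _ _ _ H0 H1) H2) H3) H4) as HH.
      eapply is_series_ext; [|exact HH]. intros n.
      rewrite <- root_sum. rewrite !zk_eq. fold z. rewrite !hyp_term_scale. fold t.
      rewrite <- !Cpow_mult_r.
      replace (2*0*n)%nat with 0%nat by lia.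
      replace (2*1*n)%nat with (2*n*1)%nat by lia.
      replace (2*2*n)%nat with (2*n*2)%nat by lia.
      replace (2*3*n)%nat with (2*n*3)%nat by lia.
      replace (2*4*n)%nat with (2*n*4)%nat by lia.
      rewrite !Cpow_mult_r. unfold plus. simpl. ring. }
    apply (is_series_scal (/ RtoC 5)%C) in Hsum.
    apply series_sub5 in Hsum.
    + eapply is_series_ext; [|exact Hsum]. intros m.
      assert (E5 : s5 (5*m) = RtoC 5).
      { unfold s5. rewrite Nat.mul_comm, Nat.Div0.mod_mul. reflexivity. }
      cbv beta. rewrite E5, term5 by assumption. fold t.
      change (Cmult (Cinv (RtoC 5%R)) (Cmult (t (5*m)%nat) (RtoC 5%R)) = t (5*m)%nat).
      field.
    + intros n Hn. unfold s5. destruct (Nat.eqb_spec (n mod 5) 0); [contradiction|].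
      unfold scal; simpl. unfold mult; simpl. ring.
  - simpl. fold Sig. field.
Qed.
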